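(* Let $0<c<1$ be a constant and $\mu=\mu(n)$ a function with $\mu(n)\to\infty$. For every strategy $\mathcal{S}_1$ there exists a strategy $\mathcal{S}_2$ which is $2\mu$-well-behaved for $cn$ rounds, which never creates a multi-edge (so $G^{\mathcal{S}_2}_{cn}(n)$ is simple), and which satisfies $\mathbb{P}[G^{\mathcal{S}_1}_{cn}(n)\in\mathtt{PM}(\mu,\mu^{-1})]\le\mathbb{P}[G^{\mathcal{S}_2}_{cn}(n)\in\mathtt{PM}(2\mu,\mu^{-1})]$.
   Context: Semi-random graph process: start from the empty graph on $[n]$; in round $t$ a vertex $u_t$ (square) is chosen uniformly at random from $[n]$ independently, the player chooses $v_t$ (circle) based on the history and $u_t$, and the edge $u_tv_t$ is added; $G^{\mathcal{S}}_t(n)$ denotes the graph after $t$ rounds under strategy $\mathcal{S}$, viewed as a directed graph with arc $u_t\to v_t$ for each round. Numbers such as $cn$ are rounded down. A vertex $j$ is covered by the circle of round $t$ if $v_t=j$. A strategy is $\omega$-well-behaved for $cn$ rounds if for all $0\le t\le\lfloor cn\rfloor$ every vertex of $G_t$ is covered by at most $\omega$ circles. For a directed graph $D$ with $m$ arcs on $[n]$, $D\in\mathtt{PM}(\mu,\delta)$ if there is $S\subseteq[n]$ such that $D[S]$ has a perfect matching, every vertex of $S$ has in-degree at most $\mu$ in $D$, and $|S|\ge n-2m\delta$. *)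

(* Defs.v *)
From HB Require Import structures.
From mathcomp Require Import all_boot all_order all_algebra.
From mathcomp Require Import boolp reals.
Set Implicit Arguments. Unset Strict Implicit. Unset Printing Implicit Defensive.
Import Order.TTheory GRing.Theory Num.Theory.
Local Open Scope ring_scope.

(* An arc (u, v) of round t: u = square (random), v = circle (chosen). *)
Definition arc (n : nat) := ('I_n * 'I_n)%type.

(* A (deterministic) strategy on [n]: given the history (list of arcs of
   previous rounds, in order) and the current square u_t, choose v_t. *)
Definition strategy (n : nat) := seq (arc n) -> 'I_n -> 'I_n.

Fixpoint run_from n (S : strategy n) (h : seq (arc n)) (us : seq 'I_n)
  : seq (arc n) :=
  match us with
  | [::] => h
  | u :: us' => run_from S (rcons h (u, S h u)) us'
  end.

Definition run n (S : strategy n) (us : seq 'I_n) : seq (arc n) :=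
  run_from S [::] us.

Definition indeg n (D : seq (arc n)) (j : 'I_n) : nat :=
  count (fun a : arc n => a.2 == j) D.

Definition adjacent n (D : seq (arc n)) (x y : 'I_n) : bool :=
  has (fun a : arc n => ((a.1 == x) && (a.2 == y)) || ((a.1 == y) && (a.2 == x))) D.

(* D[S] has a perfect matching: a partner map on S which is a fixed-point-free
   involution of S along edges of (the underlying graph of) D. *)
Definition has_perfect_matching n (D : seq (arc n)) (S : {set 'I_n}) : Prop :=
  exists p : 'I_n -> 'I_n, forall x, x \in S ->
    [/\ p x \in S, p x != x, p (p x) = x & adjacent D x (p x)].

Definition PM {R : realType} n (D : seq (arc n)) (mu delta : R) : Prop :=
  exists S : {set 'I_n},
    [/\ has_perfect_matching D S,
        (forall j, j \in S -> (indeg D j)%:R <= mu)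
      & n%:R - 2 * (size D)%:R * delta <= (#|S|)%:R].

Definition rounds (R : realType) (c : R) (n : nat) : nat := Num.truncn (c * n%:R).

Definition well_behaved {R : realType} n (S : strategy n) (omega : R) (m : nat) : Prop :=
  forall us : seq 'I_n, (size us <= m)%N -> forall j, (indeg (run S us) j)%:R <= omega.

Definition same_edge n (a b : arc n) : bool :=
  ((a.1 == b.1) && (a.2 == b.2)) || ((a.1 == b.2) && (a.2 == b.1)).

Definition simple_graph n (D : seq (arc n)) : Prop :=
  (forall a, a \in D -> a.1 != a.2) /\ pairwise (fun a b => ~~ same_edge a b) D.

Definition never_multi n (S : strategy n) (m : nat) : Prop :=
  forall us : seq 'I_n, (size us <= m)%N -> simple_graph (run S us).

(* P[G^S_m(n) satisfies P], squares uniform i.i.d. in [n] *)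
Definition prob {R : realType} n (m : nat) (S : strategy n)
  (P : seq (arc n) -> Prop) : R :=
  (#|[set t : m.-tuple 'I_n | `[< P (run S t) >] ]|)%:R / (n ^ m)%:R.

(* Main.v *)
Require Import Defs.
From HB Require Import structures.
From mathcomp Require Import all_boot all_order all_algebra.
From mathcomp Require Import boolp reals.
From mathcomp Require Import zify ring lra.
Set Implicit Arguments. Unset Strict Implicit. Unset Printing Implicit Defensive.
Import Order.TTheory GRing.Theory Num.Theory.
Local Open Scope ring_scope.

Section Gen.
Variable n : nat.

Lemma run_from_rcons (S : strategy n) h us u :
  run_from S h (rcons us u) = rcons (run_from S h us) (u, S (run_from S h us) u).
Proof. by elim: us h => [|x us IH] h //=. Qed.

Lemma run_rcons (S : strategy n) us u :
  run S (rcons us u) = rcons (run S us) (u, S (run S us) u).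
Proof. exact: run_from_rcons. Qed.

Lemma run_fst (S : strategy n) us : map fst (run S us) = us.
Proof. elim/last_ind: us => [|us u IH] //. by rewrite run_rcons map_rcons IH. Qed.

Lemma size_run (S : strategy n) us : size (run S us) = size us.
Proof. by rewrite -(size_map fst) run_fst. Qed.

Lemma count_zip1 (T1 T2 : Type) (p : pred T1) (s : seq T1) (t : seq T2) :
  size s = size t -> count (fun z => p z.1) (zip s t) = count p s.
Proof.
move=> e; have := congr1 (count p) (unzip1_zip (eq_leq e)).
by rewrite count_map => <-.
Qed.

Lemma count_zip2 (T1 T2 : Type) (p : pred T2) (s : seq T1) (t : seq T2) :
  size s = size t -> count (fun z => p z.2) (zip s t) = count p t.
Proof.
move=> e; have := congr1 (count p) (unzip2_zip (eq_leq (esym e))).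
by rewrite count_map => <-.
Qed.

Lemma count_split (T : Type) (a b : pred T) s :
  count a s = count (fun x => a x && b x) s + count (fun x => a x && ~~ b x) s.
Proof. elim: s => //= x s ->; case: (a x); case: (b x) => /=; lia. Qed.

Definition kc (D1 D2 : seq (Defs.arc n)) j :=
  count (fun z : (Defs.arc n * Defs.arc n)%type => (z.1.2 == j) && (z.2.2 == j)) (zip D1 D2).
Definition rc (D1 D2 : seq (Defs.arc n)) j :=
  count (fun z : (Defs.arc n * Defs.arc n)%type => (z.2.2 == j) && (z.1.2 != j)) (zip D1 D2).

Lemma indeg_krc D1 D2 j : size D1 = size D2 -> indeg D2 j = kc D1 D2 j + rc D1 D2 j.
Proof.
move=> e; rewrite /indeg -(count_zip2 (fun a : Defs.arc n => a.2 == j) e).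
rewrite (count_split _ (fun z : (Defs.arc n * Defs.arc n)%type => z.1.2 == j)) /kc /rc.
by congr (_ + _); apply: eq_count => z; rewrite andbC.
Qed.

Lemma kc_le1 D1 D2 j : size D1 = size D2 -> (kc D1 D2 j <= indeg D1 j)%N.
Proof.
move=> e; rewrite /indeg -(count_zip1 (fun a : Defs.arc n => a.2 == j) e).
by apply: sub_count => z /andP[].
Qed.

Lemma kc_le2 D1 D2 j : size D1 = size D2 -> (kc D1 D2 j <= indeg D2 j)%N.
Proof.
move=> e; rewrite /indeg -(count_zip2 (fun a : Defs.arc n => a.2 == j) e).
by apply: sub_count => z /andP[].
Qed.

Lemma rc_le2 D1 D2 j : size D1 = size D2 -> (rc D1 D2 j <= indeg D2 j)%N.
Proof.
move=> e; rewrite /indeg -(count_zip2 (fun a : Defs.arc n => a.2 == j) e).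
by apply: sub_count => z /andP[].
Qed.

Lemma sum_indeg (D : seq (Defs.arc n)) : (\sum_(j : 'I_n) indeg D j)%N = size D.
Proof.
elim: D => [|a D IH]; first by rewrite big1.
rewrite /indeg /= big_split /= -/(indeg D) IH.
rewrite (bigD1 a.2) //= eqxx big1 // => j /negbTE; rewrite eq_sym => -> //.
Qed.

Lemma adjC (D : seq (Defs.arc n)) x y : adjacent D x y = adjacent D y x.
Proof. by apply: eq_has => a; rewrite orbC. Qed.

Lemma adj_rcons (D : seq (Defs.arc n)) a x y : adjacent (rcons D a) x y =
  ((a.1 == x) && (a.2 == y)) || ((a.1 == y) && (a.2 == x)) || adjacent D x y.
Proof. by rewrite /adjacent has_rcons. Qed.

Lemma indeg_rcons (D : seq (Defs.arc n)) a j : indeg (rcons D a) j = (indeg D j + (a.2 == j))%N.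
Proof. by rewrite /indeg -cats1 count_cat /= addn0. Qed.

Section Strat.
Variables (R : realType) (S1 : strategy n) (mu : R).

Definition good (h : seq (Defs.arc n)) (u w : 'I_n) : bool :=
  (w != u) && ~~ adjacent h u w && (((indeg h w).+1)%:R <= mu).

Definition choice2 (h h1 : seq (Defs.arc n)) (u : 'I_n) : 'I_n :=
  if (S1 h1 u != u) && ~~ adjacent h u (S1 h1 u) && (((indeg h1 (S1 h1 u)).+1)%:R <= mu)
  then S1 h1 u
  else odflt u [pick w | good h u w].

Definition S2 : strategy n := fun h u => choice2 h (run S1 (map fst h)) u.

Lemma run_S2 us u : run S2 (rcons us u) =
  rcons (run S2 us) (u, choice2 (run S2 us) (run S1 us) u).
Proof. by rewrite run_rcons /S2 run_fst. Qed.

Lemma choice2_kept h h1 u :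
  S1 h1 u != u -> ~~ adjacent h u (S1 h1 u) -> ((indeg h1 (S1 h1 u)).+1)%:R <= mu ->
  choice2 h h1 u = S1 h1 u.
Proof. by move=> a b c; rewrite /choice2 a b c. Qed.

Lemma choice2_spec h h1 u : (exists w, good h u w) ->
  let x := choice2 h h1 u in
  [/\ x != u, ~~ adjacent h u x &
     (x = S1 h1 u /\ ((indeg h1 x).+1)%:R <= mu) \/ ((indeg h x).+1)%:R <= mu].
Proof.
move=> [w0 Hw0] /=; rewrite /choice2.
case: ifP => [/andP[/andP[a b] c]|_]; first by split => //; left.
case: pickP => [w /andP[/andP[a b] c]|/(_ w0)]; last by rewrite Hw0.
by split => //; right.
Qed.

Lemma inv_match us x y : x != y -> adjacent (run S1 us) x y ->
  (indeg (run S1 us) x)%:R <= mu -> (indeg (run S1 us) y)%:R <= mu ->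
  adjacent (run S2 us) x y.
Proof.
move=> xy; elim/last_ind: us => [|us u IH] //.
rewrite run_S2 run_rcons !adj_rcons !indeg_rcons /=.
set h := run S2 us; set h1 := run S1 us => H Hx Hy.
have Hx' : (indeg h1 x)%:R <= mu by apply: le_trans Hx; rewrite ler_nat leq_addr.
have Hy' : (indeg h1 y)%:R <= mu by apply: le_trans Hy; rewrite ler_nat leq_addr.
case/orP: H => [H|H]; last by rewrite IH ?orbT.
have [adj|nadj] := boolP (adjacent h x y); first by rewrite orbT.
case/orP: H => /andP[/eqP eu /eqP ev]; subst u.
- rewrite ev eqxx addn1 in Hy.
  rewrite choice2_kept ?ev ?eqxx //; first by rewrite eq_sym.
- rewrite ev eqxx addn1 in Hx.
  rewrite choice2_kept ?ev ?eqxx ?orbT //; last by rewrite adjC.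
Qed.

Lemma inv_wb (m : nat) : 0 <= mu ->
  (forall (h : seq (Defs.arc n)) u, (size h < m)%N -> exists w, good h u w) ->
  forall us, (size us <= m)%N ->
  [/\ forall j, (kc (run S1 us) (run S2 us) j)%:R <= mu,
      forall j, (rc (run S1 us) (run S2 us) j)%:R <= mu
    & simple_graph (run S2 us)].
Proof.
move=> mu0 Hex; elim/last_ind => [|us u IH] Hs.
  by split => // j; rewrite /kc /rc /= run_S2.
rewrite size_rcons in Hs.
have [IHk IHr [IHs1 IHs2]] := IH (ltnW Hs).
have e : size (run S1 us) = size (run S2 us) by rewrite !size_run.
have ex : exists w, good (run S2 us) u w by apply: Hex; rewrite size_run.
have := choice2_spec (run S1 us) ex.
rewrite run_S2 run_rcons /kc /rc zip_rcons //.
set h := run S2 us; set h1 := run S1 us; set x := choice2 h h1 u.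
move=> [xu nadj hcase].
split.
- move=> j; rewrite -cats1 count_cat /= addn0 -/(kc h1 h j).
  case: eqP => [ev|] /=; last by rewrite addn0.
  case: eqP => [exj|] /=; last by rewrite addn0.
  rewrite addn1; case: hcase => [[_ Hl]|Hr].
  + apply: le_trans Hl; rewrite ler_nat ltnS -exj.
    by apply: kc_le1.
  + apply: le_trans Hr; rewrite ler_nat ltnS -exj.
    by apply: kc_le2.
- move=> j; rewrite -cats1 count_cat /= addn0 -/(rc h1 h j).
  case: eqP => [exj|] /=; last by rewrite addn0.
  case: eqP => [ev|] /=; first by rewrite addn0.
  move=> nev; rewrite addn1; case: hcase => [[xv _]|Hr].
  + by exfalso; apply: nev; rewrite -xv.
  + apply: le_trans Hr; rewrite ler_nat ltnS -exj.
    by apply: rc_le2.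
- split.
  + move=> a; rewrite mem_rcons in_cons => /orP[/eqP ->|]; last exact: IHs1.
    by rewrite /= eq_sym.
  + rewrite -cats1 pairwise_cat IHs2 allrel1r /= andbT.
    move: nadj; rewrite /adjacent -all_predC; apply: sub_all => a /=.
    by rewrite /same_edge.
Qed.

Lemma exists_good (c : R) (m : nat) : 0 < c < 1 -> 1 < mu * (1 - c) ->
  m%:R <= c * n%:R ->
  forall (h : seq (Defs.arc n)) u, (size h < m)%N -> exists w, good h u w.
Proof.
move=> /andP[c0 c1] hmu hm h u hs.
case: (pickP (good h u)) => [w Hw|Hn]; first by exists w.
exfalso.
set A := [set w | adjacent h u w].
set H := [set w | mu < ((indeg h w).+1)%:R].
have sub : [set: 'I_n] \subset [set u] :|: A :|: H.
  apply/subsetP => w _; move: (Hn w); rewrite /good !inE.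
  case: eqP => [->|_]; first by [].
  case: (adjacent h u w) => //=.
  by move/negbT; rewrite -ltNge.
have cn : (n <= 1 + #|A| + #|H|)%N.
  have := subset_leq_card sub; rewrite cardsT card_ord => /leq_trans; apply.
  apply: leq_trans (leq_card_setU _ _) _; rewrite leq_add2r.
  by apply: leq_trans (leq_card_setU _ _) _; rewrite cards1.
have cA : (#|A| <= size h)%N.
  pose oth (a : Defs.arc n) := if a.1 == u then a.2 else a.1.
  apply: (@leq_trans #|[seq oth a | a <- h]|); last by rewrite -(size_map oth h) card_size.
  apply: subset_leq_card; apply/subsetP => w; rewrite inE => /hasP[a ah ha].
  apply/mapP; exists a => //; rewrite /oth.
  case/orP: ha => /andP[/eqP -> /eqP ->]; first by rewrite eqxx.
  by case: eqP.
have cH : #|H|%:R * (mu - 1) <= (size h)%:R.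
  rewrite -(sum_indeg h) natr_sum.
  apply: le_trans (_ : \sum_(w in H) (indeg h w)%:R <= _).
    rewrite mulr_natl -sumr_const; apply: ler_sum => w; rewrite inE => hw.
    move: hw; rewrite -addn1 natrD; lra.
  rewrite [X in _ <= X](bigID (mem H)) /= lerDl.
  by apply: sumr_ge0 => i _.
have ex : forall a b : nat, (a <= b)%N -> a%:R <= b%:R :> R by move=> a b; rewrite ler_nat.
have cn' := ex _ _ cn; have cA' := ex _ _ cA; have hs' := ex _ _ hs.
rewrite !natrD in cn'; rewrite -addn1 natrD in hs'.
move: cn' cA' hs' cH hm hmu; set a := #|A|%:R; set k := #|H|%:R; set t := (size h)%:R.
set N := n%:R; have N0 : 0 <= N by [].
have a0 : 0 <= a by []. have k0 : 0 <= k by [].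
move=> h1 h2 h3 h4 h5 h6.
nra.
Qed.
End Strat.
End Gen.

Unset Implicit Arguments.

Theorem proposition9 (R : realType) (c : R) (mu : nat -> R) :
  0 < c < 1 ->
  (forall M : R, exists N : nat, forall n : nat, (N <= n)%N -> M <= mu n) ->
  forall S1 : forall n : nat, strategy n,
  exists N : nat, forall n : nat, (N <= n)%N ->
  exists S2 : strategy n,
    [/\ well_behaved S2 (2 * mu n) (rounds c n),
        never_multi S2 (rounds c n)
      & prob (R:=R) (rounds c n) (S1 n) (fun D => PM D (mu n) (mu n)^-1)
          <= prob (R:=R) (rounds c n) S2 (fun D => PM D (2 * mu n) (mu n)^-1)].
Proof.
move=> hc hmu S1.
have /andP[c0 c1] := hc.
have c1' : 0 < 1 - c by rewrite subr_gt0.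
have [N HN] := hmu ((1 - c)^-1 + 1).
exists N => n Nn.
set m := rounds c n.
have Hmu : 1 < mu n * (1 - c).
  have := ler_wpM2r (ltW c1') (HN n Nn); rewrite mulrDl mulVf ?gt_eqF //; lra.
have hm : m%:R <= c * n%:R.
  by rewrite /m /rounds truncn_le mulr_ge0 // ltW.
have mu0 : 0 <= mu n by nra.
have Hex := exists_good hc Hmu hm.
have WB := inv_wb (S1 n) mu0 Hex.
exists (S2 (S1 n) (mu n)); split.
- move=> us hs j; have [Hk Hr _] := WB us hs.
  have e : size (run (S1 n) us) = size (run (S2 (S1 n) (mu n)) us) by rewrite !size_run.
  rewrite (indeg_krc j e) natrD; have := Hk j; have := Hr j; lra.
- by move=> us hs; case: (WB us hs).
rewrite /prob ler_wpM2r ?invr_ge0 ?ler0n // ler_nat.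
apply: subset_leq_card; apply/subsetP => t; rewrite !inE => /asboolP HP; apply/asboolP.
have ht : (size t <= m)%N by rewrite size_tuple.
have [Hk Hr _] := WB t ht.
case: HP => S [[p Hp] Hdeg Hsz]; exists S; split.
- exists p => x xS; have [pxS pxx ppx adj] := Hp x xS; split => //.
  apply: inv_match => //; [by rewrite eq_sym | exact: Hdeg | exact: Hdeg].
- move=> j _.
  have e : size (run (S1 n) t) = size (run (S2 (S1 n) (mu n)) t) by rewrite !size_run.
  rewrite (indeg_krc j e) natrD; have := Hk j; have := Hr j; lra.
- by move: Hsz; rewrite !size_run.
Qed.
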